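(* Let $\{f_i\}_{i=1}^k$ be a frame for $\mathcal{H}_n$. If $(p,q)$-surgery on $\{f_i\}_{i=1}^k$ is possible, then $(r,r-p+q)$-surgery on $\{f_i\}_{i=1}^k$ is possible for every $r=p+1,p+2,\dots,k$.
   Context: $\mathcal{H}_n$ is an $n$-dimensional real or complex Hilbert space. A sequence $\{h_i\}$ in $\mathcal{H}_n$ is a tight frame if there is $\lambda>0$ with $\sum_i|\langle f,h_i\rangle|^2=\lambda\|f\|^2$ for all $f\in\mathcal{H}_n$. For a frame $\{f_i\}_{i=1}^k$, $(p,q)$-surgery is possible if there exist $I\subseteq\{1,\dots,k\}$ with $|I|=p$ and vectors $g_1,\dots,g_q\in\mathcal{H}_n$ such that $\{f_i\}_{i\notin I}\cup\{g_j\}_{j=1}^q$ is a tight frame for $\mathcal{H}_n$. *)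

(* Defs.v *)
From HB Require Import structures.
From mathcomp Require Import all_boot all_order all_algebra.
From mathcomp Require Import complex.
From mathcomp Require Import reals.
Set Implicit Arguments. Unset Strict Implicit. Unset Printing Implicit Defensive.
Import Order.TTheory GRing.Theory Num.Theory.
Local Open Scope ring_scope.

(* H_n is modelled as K^n (row vectors 'rV[K]_n) with the standard inner
   product <x, y> = \sum_i x_i * conj (y_i); K = R (conj = id) in the real
   case, K = R[i] = complex R (conj = complex conjugation) in the complex case. *)
Section Frames.
Variables (K : numDomainType) (conj : K -> K) (n : nat).

Definition ip (x y : 'rV[K]_n) : K := \sum_(i < n) x 0 i * conj (y 0 i).
Definition normsq (x : 'rV[K]_n) : K := \sum_(i < n) `|x 0 i| ^+ 2.
Definition frame_energy (s : seq 'rV[K]_n) (x : 'rV[K]_n) : K :=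
  \sum_(h <- s) `|ip x h| ^+ 2.

Definition is_frame (s : seq 'rV[K]_n) : Prop :=
  exists A B : K, 0 < A /\ A <= B /\
    forall x, A * normsq x <= frame_energy s x /\ frame_energy s x <= B * normsq x.

Definition is_tight_frame (s : seq 'rV[K]_n) : Prop :=
  exists lambda : K, 0 < lambda /\ forall x, frame_energy s x = lambda * normsq x.

Definition surgery_possible (k : nat) (f : 'I_k -> 'rV[K]_n) (p q : nat) : Prop :=
  exists I : {set 'I_k}, #|I| = p /\
    exists g : 'I_q -> 'rV[K]_n,
      is_tight_frame ([seq f i | i in ~: I] ++ [seq g j | j : 'I_q]).
End Frames.

(* Main.v *)
Require Import Defs.
From HB Require Import structures.
From mathcomp Require Import all_boot all_order all_algebra.
From mathcomp Require Import complex.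
From mathcomp Require Import reals.
From mathcomp Require Import zify.
Import Order.TTheory GRing.Theory Num.Theory.
Local Open Scope ring_scope.

Lemma main (K : numDomainType) (conj : K -> K) n k (f : 'I_k -> 'rV[K]_n) (p q r : nat) :
  surgery_possible conj f p q -> (p < r <= k)%N -> surgery_possible conj f r (r - p + q)%N.
Proof.
move=> [I [cI [g [lam [lam0 Hl]]]]] /andP[pr rk].
set D := [set x in take (r - p) (enum (~: I))].
have DI : forall x, x \in D -> x \notin I.
  move=> x; rewrite inE => /mem_take; rewrite mem_enum inE; done.
have cD : #|D| = (r - p)%N.
  rewrite cardsE (card_uniqP _); last by rewrite take_uniq ?enum_uniq.
  rewrite size_takel // -cardE cardsCs setCK card_ord cI.
  lia.
set J := I :|: D.
have cJ : #|J| = r.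
  rewrite cardsU cI cD.
  have -> : I :&: D = set0.
    apply/setP => x; rewrite inE [in RHS]inE; apply/negP => /andP[xI xD].
    by move: (DI x xD); rewrite xI.
  rewrite cards0 subn0; apply/eqP; rewrite subnKC //; exact: ltnW.
set s := [seq f i | i in D] ++ [seq g j | j : 'I_q].
have ss : size s = (r - p + q)%N.
  rewrite size_cat !size_map -!cardE cD; congr (_ + _)%N.
by rewrite -enumT size_enum_ord.
exists J; split => //.
exists (fun j : 'I_(r - p + q) => nth 0 s j).
have -> : [seq nth 0 s j | j : 'I_(r - p + q)] = s.
  rewrite -[s in RHS](mkseq_nth 0) ss /mkseq -val_enum_ord -map_comp.
  by rewrite /image_mem enumT.
exists lam; split => // x; rewrite -Hl /frame_energy; apply: perm_big.
rewrite /s catA; apply: perm_cat => //.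
rewrite -map_cat; apply: perm_map.
apply: uniq_perm.
- rewrite cat_uniq !enum_uniq /=.
rewrite andbT; apply/hasPn => y; rewrite mem_enum => yD.
  by rewrite mem_enum in_setC in_setU yD orbT.
- exact: enum_uniq.
move=> y; rewrite mem_cat !mem_enum in_setC in_setU negb_or in_setC.
case yD: (y \in D); rewrite /= ?andbT ?orbT //=.
by rewrite (DI y yD).
by rewrite orbF.
Qed.

Theorem theorem3p2 :
  (* real Hilbert space R^n *)
  (forall (R : realType) (n k : nat) (f : 'I_k -> 'rV[R]_n) (p q : nat),
     is_frame id [seq f i | i : 'I_k] ->
     surgery_possible id f p q ->
     forall r : nat, (p < r <= k)%N -> surgery_possible id f r (r - p + q)%N)
  /\
  (* complex Hilbert space C^n *)
  (forall (R : realType) (n k : nat) (f : 'I_k -> 'rV[R[i]]_n) (p q : nat),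
     is_frame Num.conj [seq f i | i : 'I_k] ->
     surgery_possible Num.conj f p q ->
     forall r : nat, (p < r <= k)%N ->
       surgery_possible Num.conj f r (r - p + q)%N).
Proof.
split=> R n k f p q _ H r Hr; exact: main H Hr.
Qed.
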